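(* Let $\Theta=\Theta(t)$ be a solution of the Kuramoto model with coupling strength $\kappa>0$, and let $\mathcal{I}$ be a time interval on which $R(t):=R(\Theta(t))>0$, with $\phi(t)$ a smooth branch of the phase order parameter on $\mathcal{I}$. Define $$\Delta(t):=\frac1N\sum_{k=1}^N\sin^2(\theta_k(t)-\phi(t)),\qquad t\in\mathcal{I}.$$ Then $$\dot R(t)\ \ge\ \kappa\sqrt{\Delta(t)}\left(R(t)\sqrt{\Delta(t)}-\frac{D(\Omega)}{2\kappa}\right),\qquad t\in\mathcal{I}.$$
   Context: Kuramoto model: for $N\ge 2$, natural frequencies $\Omega=(\nu_1,\dots,\nu_N)\in\mathbb{R}^N$ and coupling strength $\kappa$, the phases $\Theta(t)=(\theta_1(t),\dots,\theta_N(t))\in\mathbb{R}^N$ satisfy $\dot\theta_i=\nu_i+\frac{\kappa}{N}\sum_{j=1}^N\sin(\theta_j-\theta_i)$, $1\le i\le N$. $D(\Omega):=\max_{i,j}|\nu_i-\nu_j|$. The order parameters $R(\Theta)\in[0,1]$ and $\phi(\Theta)$ (defined mod $2\pi$ when $R>0$) are given by $R(\Theta)e^{\mathrm{i}\phi(\Theta)}=\frac1N\sum_{j=1}^Ne^{\mathrm{i}\theta_j}$. *)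

(* Defs.v *)
From Stdlib Require Import Reals Lra.
From Coquelicot Require Import Coquelicot.
Open Scope R_scope.

Fixpoint sumN (f : nat -> R) (n : nat) : R :=
  match n with O => 0 | S m => sumN f m + f m end.

Fixpoint maxN (f : nat -> R) (n : nat) : R :=
  match n with O => 0 | S m => Rmax (maxN f m) (f m) end.

Definition Ddiam (N : nat) (nu : nat -> R) : R :=
  maxN (fun i => maxN (fun j => Rabs (nu i - nu j)) N) N.

(* real and imaginary parts of (1/N) sum_j e^{i theta_j} *)
Definition ordRe (N : nat) (th : nat -> R) : R := / INR N * sumN (fun j => cos (th j)) N.
Definition ordIm (N : nat) (th : nat -> R) : R := / INR N * sumN (fun j => sin (th j)) N.

Definition ordR (N : nat) (th : nat -> R) : R :=
  sqrt (ordRe N th ^ 2 + ordIm N th ^ 2).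

Definition kuramoto_solution (N : nat) (nu : nat -> R) (kappa : R)
  (theta : nat -> R -> R) : Prop :=
  forall i t, (i < N)%nat ->
    is_derive (theta i) t
      (nu i + kappa / INR N * sumN (fun j => sin (theta j t - theta i t)) N).

Definition is_interval (I : R -> Prop) : Prop :=
  forall a b c, I a -> I c -> a <= b <= c -> I b.

(* Main.v *)
Require Import Defs.
From Stdlib Require Import Reals Lra Lia.
From Coquelicot Require Import Coquelicot.
Open Scope R_scope.

Lemma sumN_ext (f g : nat -> R) n : (forall j, (j < n)%nat -> f j = g j) -> sumN f n = sumN g n.
Proof. induction n; simpl; intros H; auto. rewrite IHn by (intros; apply H; lia). rewrite H by lia. auto. Qed.

Lemma sumN_plus (f g : nat -> R) n : sumN (fun j => f j + g j) n = sumN f n + sumN g n.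
Proof. induction n; simpl; [lra|rewrite IHn; lra]. Qed.

Lemma sumN_scal c (f : nat -> R) n : sumN (fun j => c * f j) n = c * sumN f n.
Proof. induction n; simpl; [lra|rewrite IHn; lra]. Qed.

Lemma sumN_const c n : sumN (fun _ => c) n = INR n * c.
Proof. induction n; simpl sumN; [simpl; lra|rewrite IHn, S_INR; lra]. Qed.

Lemma sumN_le (f g : nat -> R) n : (forall j, (j < n)%nat -> f j <= g j) -> sumN f n <= sumN g n.
Proof. induction n; simpl; intros H; [lra|]. assert (f n <= g n) by (apply H; lia).
  assert (sumN f n <= sumN g n) by (apply IHn; intros; apply H; lia). lra. Qed.

Lemma sumN_abs (f : nat -> R) n : Rabs (sumN f n) <= sumN (fun j => Rabs (f j)) n.
Proof. induction n; simpl. rewrite Rabs_R0; lra.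
  eapply Rle_trans. apply Rabs_triang. lra. Qed.

Lemma maxN_ge (f : nat -> R) n i : (i < n)%nat -> f i <= Defs.maxN f n.
Proof. induction n; simpl; intros H. lia.
  destruct (Nat.eq_dec i n). subst. apply Rmax_r.
  eapply Rle_trans. apply IHn; lia. apply Rmax_l. Qed.

Lemma maxN_ge0 (f : nat -> R) n : 0 <= Defs.maxN f n.
Proof. induction n; simpl. lra. eapply Rle_trans. apply IHn. apply Rmax_l. Qed.

Lemma argmin (nu : nat -> R) n : (1 <= n)%nat -> exists a, (a < n)%nat /\ forall j, (j < n)%nat -> nu a <= nu j.
Proof. induction n; intros H. lia.
  destruct n. exists O. split. lia. intros j Hj. assert (j = O) by lia. subst; lra.
  destruct IHn as [a [Ha Hm]]. lia.
  destruct (Rle_dec (nu a) (nu (S n))).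
  exists a. split. lia. intros j Hj. destruct (Nat.eq_dec j (S n)). subst; auto. apply Hm; lia.
  exists (S n). split. lia. intros j Hj. destruct (Nat.eq_dec j (S n)). subst; lra.
  specialize (Hm j ltac:(lia)). lra. Qed.

Lemma argmax (nu : nat -> R) n : (1 <= n)%nat -> exists a, (a < n)%nat /\ forall j, (j < n)%nat -> nu j <= nu a.
Proof. intros H. destruct (argmin (fun j => - nu j) n H) as [a [Ha Hm]].
  exists a. split; auto. intros j Hj. specialize (Hm j Hj). simpl in Hm. lra. Qed.

Lemma center (nu : nat -> R) N : (1 <= N)%nat -> exists c, forall j, (j < N)%nat -> Rabs (nu j - c) <= Ddiam N nu / 2.
Proof. intros H. destruct (argmin nu N H) as [a [Ha Hm]]. destruct (argmax nu N H) as [b [Hb HM]].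
  assert (Rabs (nu b - nu a) <= Ddiam N nu).
  { unfold Ddiam. eapply Rle_trans. 2: apply maxN_ge with (i := b); auto.
    apply (maxN_ge (fun j => Rabs (nu b - nu j))); auto. }
  exists ((nu a + nu b)/2). intros j Hj. specialize (Hm j Hj). specialize (HM j Hj).
  rewrite Rabs_pos_eq in H0 by lra. apply Rabs_le. lra. Qed.

Lemma cs (a : nat -> R) n : (0 < n)%nat ->
  / INR n * sumN (fun j => Rabs (a j)) n <= sqrt (/ INR n * sumN (fun j => a j ^ 2) n).
Proof. intros Hn. assert (HN : 0 < INR n) by (apply lt_0_INR; lia).
  set (S := / INR n * sumN (fun j => Rabs (a j)) n).
  set (Q := / INR n * sumN (fun j => a j ^ 2) n).
  assert (HS : 0 <= S). { unfold S. apply Rmult_le_pos. left; apply Rinv_0_lt_compat; auto.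
    replace 0 with (sumN (fun _ => 0) n). apply sumN_le. intros; apply Rabs_pos.
    rewrite sumN_const; lra. }
  assert (H0 : 0 <= sumN (fun j => (Rabs (a j) - S) ^ 2) n).
  { replace 0 with (sumN (fun _ => 0) n). apply sumN_le. intros; apply pow2_ge_0.
    rewrite sumN_const; lra. }
  rewrite (sumN_ext _ (fun j => a j ^ 2 + ((-2 * S) * Rabs (a j) + S ^ 2))) in H0.
  2:{ intros j _. rewrite <- (pow2_abs (a j)). ring. }
  rewrite sumN_plus, sumN_plus, sumN_scal, sumN_const in H0.
  assert (E1 : sumN (fun j => Rabs (a j)) n = INR n * S) by (unfold S; field; lra).
  assert (E2 : sumN (fun j => a j ^ 2) n = INR n * Q) by (unfold Q; field; lra).
  rewrite E1, E2 in H0.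
  assert (S ^ 2 <= Q) by nra.
  rewrite <- (sqrt_pow2 S HS). apply sqrt_le_1_alt. lra. Qed.

Lemma is_derive_sumN (f : nat -> R -> R) (df : nat -> R) n x :
  (forall j, (j < n)%nat -> is_derive (f j) x (df j)) ->
  is_derive (fun y => sumN (fun j => f j y) n) x (sumN df n).
Proof. induction n; intros H; simpl.
  apply (is_derive_const (V := R_NormedModule) 0 x).
  apply (is_derive_plus (fun y => sumN (fun j => f j y) n) (f n)).
  apply IHn; intros; apply H; lia. apply H; lia. Qed.

Theorem lemma2p1 (N : nat) (nu : nat -> R) (kappa : R) (theta : nat -> R -> R)
  (I : R -> Prop) (phi : R -> R) :
  (2 <= N)%nat -> 0 < kappa ->
  kuramoto_solution N nu kappa theta ->
  is_interval I ->
  (forall t, I t -> 0 < ordR N (fun j => theta j t)) ->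
  (forall t, I t ->
     ordR N (fun j => theta j t) * cos (phi t) = ordRe N (fun j => theta j t) /\
     ordR N (fun j => theta j t) * sin (phi t) = ordIm N (fun j => theta j t)) ->
  (forall t, I t -> ex_derive phi t) ->
  forall t, I t ->
    let Rt := ordR N (fun j => theta j t) in
    let Delta := / INR N * sumN (fun k => (sin (theta k t - phi t)) ^ 2) N in
    ex_derive (fun s => ordR N (fun j => theta j s)) t /\
    Derive (fun s => ordR N (fun j => theta j s)) t
      >= kappa * sqrt Delta * (Rt * sqrt Delta - Ddiam N nu / (2 * kappa)).
Proof.
  intros HN Hk Hsol _ Hpos Hphi _ t It Rt Delta.
  specialize (Hpos t It). destruct (Hphi t It) as [Hc Hs]. fold Rt in Hpos, Hc, Hs.
  assert (HNp : 0 < INR N) by (apply lt_0_INR; lia).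
  set (d := fun j => nu j + kappa / INR N * sumN (fun k => sin (theta k t - theta j t)) N).
  set (sj := fun j => sin (theta j t - phi t)).
  assert (Hd : forall j, d j = nu j - kappa * Rt * sj j).
  { intros j. unfold d, sj.
    rewrite (sumN_ext _ (fun k => cos (theta j t) * sin (theta k t) + (- sin (theta j t)) * cos (theta k t))).
    2:{ intros k _. rewrite sin_minus. ring. }
    rewrite sumN_plus, !sumN_scal.
    unfold ordRe, ordIm in Hc, Hs.
    assert (E1 : sumN (fun k => sin (theta k t)) N = INR N * (Rt * sin (phi t))) by (rewrite Hs; field; lra).
    assert (E2 : sumN (fun k => cos (theta k t)) N = INR N * (Rt * cos (phi t))) by (rewrite Hc; field; lra).
    rewrite E1, E2, sin_minus. field. lra. }
  set (X' := / INR N * sumN (fun j => d j * - sin (theta j t)) N).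
  set (Y' := / INR N * sumN (fun j => d j * cos (theta j t)) N).
  assert (DX : is_derive (fun s => ordRe N (fun j => theta j s)) t X').
  { unfold ordRe, X'. apply is_derive_scal. apply (is_derive_sumN (fun j s => cos (theta j s))).
    intros j Hj. apply (is_derive_comp cos (theta j)). apply is_derive_cos. apply Hsol; auto. }
  assert (DY : is_derive (fun s => ordIm N (fun j => theta j s)) t Y').
  { unfold ordIm, Y'. apply is_derive_scal. apply (is_derive_sumN (fun j s => sin (theta j s))).
    intros j Hj. apply (is_derive_comp sin (theta j)). apply is_derive_sin. apply Hsol; auto. }
  assert (DU := is_derive_plus _ _ _ _ _ (is_derive_pow _ 2 _ _ DX) (is_derive_pow _ 2 _ _ DY)).
  assert (Hin : 0 < ordRe N (fun j => theta j t) ^ 2 + ordIm N (fun j => theta j t) ^ 2).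
  { rewrite <- Hc, <- Hs. pose proof (sin2_cos2 (phi t)). unfold Rsqr in H. nra. }
  assert (DR := is_derive_sqrt _ _ _ DU Hin).
  split. eexists. exact DR.
  apply is_derive_unique in DR. match type of DR with _ = ?v => assert (E : Derive (fun s => ordR N (fun j => theta j s)) t = v) by exact DR end.
  rewrite E; clear E DR. simpl. change (sqrt (ordRe N (fun j => theta j t) ^ 2 + ordIm N (fun j => theta j t) ^ 2)) with Rt. fold Rt. rewrite <- Hc, <- Hs.
  match goal with |- ?v >= _ => replace v with (cos (phi t) * X' + sin (phi t) * Y') end.
  2:{ unfold plus; simpl.
    assert (Hsq : Rt * cos (phi t) * (Rt * cos (phi t) * 1) + Rt * sin (phi t) * (Rt * sin (phi t) * 1) = Rt * Rt).
    { pose proof (sin2_cos2 (phi t)) as H. unfold Rsqr in H.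
      transitivity (Rt * Rt * (sin (phi t) * sin (phi t) + cos (phi t) * cos (phi t))). ring. rewrite H; ring. }
    rewrite Hsq, sqrt_square by lra. field; lra. }
  assert (E3 : cos (phi t) * X' + sin (phi t) * Y' = kappa * Rt * Delta - / INR N * sumN (fun j => nu j * sj j) N).
  { transitivity (/ INR N * sumN (fun j => kappa * Rt * (sj j ^ 2) + (-1) * (nu j * sj j)) N).
    - unfold X', Y'.
      replace (cos (phi t) * (/ INR N * sumN (fun j => d j * - sin (theta j t)) N) +
        sin (phi t) * (/ INR N * sumN (fun j => d j * cos (theta j t)) N)) with
        (/ INR N * (sumN (fun j => cos (phi t) * (d j * - sin (theta j t))) N +
           sumN (fun j => sin (phi t) * (d j * cos (theta j t))) N)) by (rewrite !sumN_scal; ring).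
      rewrite <- sumN_plus. f_equal. apply sumN_ext. intros j _. rewrite Hd. unfold sj. rewrite sin_minus. ring.
    - rewrite sumN_plus, !sumN_scal. unfold Delta, sj. ring. }
  rewrite E3.
  assert (Hs0 : sumN sj N = 0).
  { unfold sj. rewrite (sumN_ext _ (fun k => cos (phi t) * sin (theta k t) + (- sin (phi t)) * cos (theta k t))).
    2:{ intros k _. rewrite sin_minus. ring. }
    rewrite sumN_plus, !sumN_scal.
    unfold ordRe, ordIm in Hc, Hs.
    assert (E1 : sumN (fun k => sin (theta k t)) N = INR N * (Rt * sin (phi t))) by (rewrite Hs; field; lra).
    assert (E2 : sumN (fun k => cos (theta k t)) N = INR N * (Rt * cos (phi t))) by (rewrite Hc; field; lra).
    rewrite E1, E2. ring. }
  destruct (center nu N ltac:(lia)) as [c0 Hc0].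
  assert (ES : sumN (fun j => nu j * sj j) N = sumN (fun j => (nu j - c0) * sj j) N + c0 * sumN sj N).
  { rewrite <- sumN_scal, <- sumN_plus. apply sumN_ext. intros; ring. }
  rewrite Hs0, Rmult_0_r, Rplus_0_r in ES.
  assert (HA : Rabs (sumN (fun j => (nu j - c0) * sj j) N) <= Ddiam N nu / 2 * sumN (fun j => Rabs (sj j)) N).
  { eapply Rle_trans. apply sumN_abs. rewrite <- sumN_scal. apply sumN_le. intros j Hj.
    rewrite Rabs_mult. apply Rmult_le_compat_r. apply Rabs_pos. auto. }
  assert (HCS := cs sj N ltac:(lia)). fold Delta in HCS. unfold sj in HCS. fold Delta in HCS.
  assert (HD0 : 0 <= Delta).
  { unfold Delta. apply Rmult_le_pos. left; apply Rinv_0_lt_compat; auto.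
    replace 0 with (sumN (fun _ => 0) N). apply sumN_le. intros; apply pow2_ge_0.
    rewrite sumN_const; lra. }
  assert (HDD : 0 <= Ddiam N nu) by (unfold Ddiam; apply maxN_ge0).
  pose proof (sqrt_sqrt Delta HD0) as Hsq2.
  replace (kappa * sqrt Delta * (Rt * sqrt Delta - Ddiam N nu / (2 * kappa)))
    with (kappa * Rt * (sqrt Delta * sqrt Delta) - sqrt Delta * Ddiam N nu / 2) by (field; lra).
  rewrite Hsq2, ES.
  set (S := sumN (fun j => (nu j - c0) * sj j) N) in *.
  set (T := sumN (fun j => Rabs (sj j)) N) in *.
  assert (HB : / INR N * Rabs S <= Ddiam N nu / 2 * sqrt Delta).
  { apply Rle_trans with (Ddiam N nu / 2 * (/ INR N * T)).
    - pose proof (Rinv_0_lt_compat _ HNp). nra.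
    - apply Rmult_le_compat_l. lra. exact HCS. }
  pose proof (Rle_abs S). pose proof (Rinv_0_lt_compat _ HNp). nra.
Qed.
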